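(* For each $0<c<1/2$ the equation $$-jcK\!\left(\tfrac{(c^2-1)(1-j^2)}{c^2}\right)+\tfrac{j}{c}\Pi\!\left(\tfrac{c^2-1}{c^2},\tfrac{(c^2-1)(1-j^2)}{c^2}\right)=\tfrac{\pi}{4}$$ has exactly one solution $j\in[0,1]$.
   Context: For $k,n<1$: $K(k)=\int_0^{\pi/2}(1-k\sin^2\theta)^{-1/2}d\theta$ and $\Pi(n,k)=\int_0^{\pi/2}\frac{d\theta}{(1-n\sin^2\theta)\sqrt{1-k\sin^2\theta}}$. *)

(* Defs.v *)
From Stdlib Require Import Reals.
From Coquelicot Require Import Coquelicot.
Open Scope R_scope.

(* Complete elliptic integral of the first kind, parameter convention:
   K(k) = int_0^{pi/2} (1 - k sin^2 t)^{-1/2} dt   (for k < 1). *)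
Definition ellK (k : R) : R :=
  RInt (fun t => / sqrt (1 - k * (sin t) ^ 2)) 0 (PI / 2).

Definition ellPi (n k : R) : R :=
  RInt (fun t => / ((1 - n * (sin t) ^ 2) * sqrt (1 - k * (sin t) ^ 2))) 0 (PI / 2).

(* Main.v *)
Require Import Defs.
From Stdlib Require Import Reals Lra Psatz.
From Coquelicot Require Import Coquelicot.
Open Scope R_scope.

Definition bb c := (1 - c^2)/c^2.
Definition DD c j t := 1 + bb c * (1 - j^2) * sin t ^ 2.
Definition GG c t := - c + / (c * (1 + bb c * sin t ^ 2)).
Definition hh c j t := GG c t * (j / sqrt (DD c j t)).
Definition FF c j : R := RInt (hh c j) 0 (PI/2).

Lemma bb_pos c : 0 < c < 1 -> 0 < bb c.
Proof. intros. unfold bb. apply Rdiv_lt_0_compat; nra. Qed.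

Lemma sin2_bnd t : 0 <= sin t ^ 2 <= 1.
Proof. pose proof (sin2_cos2 t). unfold Rsqr in H. nra. Qed.

Lemma DD_ge1 c j t : 0 < c < 1 -> 0 <= j <= 1 -> 1 <= DD c j t.
Proof. intros. pose proof (bb_pos c H). pose proof (sin2_bnd t). unfold DD.
 assert (0 <= 1 - j^2) by nra. assert (0 <= bb c * (1-j^2)) by nra. nra. Qed.

Lemma den_pos c t : 0 < c < 1 -> 0 < c * (1 + bb c * sin t ^ 2).
Proof. intros. pose proof (bb_pos c H). pose proof (sin2_bnd t). apply Rmult_lt_0_compat. lra. assert (0 <= bb c * sin t ^ 2) by (apply Rmult_le_pos; lra). lra. Qed.

Lemma hh_der c j t : 0 < c < 1 -> 0 <= j <= 1 -> ex_derive (hh c j) t.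
Proof. intros. pose proof (DD_ge1 c j t H H0). pose proof (den_pos c t H).
 unfold hh, GG, DD in *. auto_derive. repeat split; try lra; try (apply Rgt_not_eq, sqrt_lt_R0; lra).
Qed.

Lemma k_eq c j t : 0 < c -> 1 - (c ^ 2 - 1) * (1 - j ^ 2) / c ^ 2 * sin t ^ 2 = DD c j t.
Proof. intros. unfold DD, bb. field. lra. Qed.
Lemma n_eq c t : 0 < c -> 1 - (c ^ 2 - 1) / c ^ 2 * sin t ^ 2 = 1 + bb c * sin t ^ 2.
Proof. intros. unfold bb. field. lra. Qed.

Lemma expr_eq c j : 0 < c < 1 -> 0 <= j <= 1 ->
    - j * c * ellK ((c ^ 2 - 1) * (1 - j ^ 2) / c ^ 2)
    + j / c * ellPi ((c ^ 2 - 1) / c ^ 2) ((c ^ 2 - 1) * (1 - j ^ 2) / c ^ 2)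
    = FF c j.
Proof.
  intros Hc Hj. unfold ellK, ellPi, FF.
  set (f := fun t => / sqrt (1 - (c ^ 2 - 1) * (1 - j ^ 2) / c ^ 2 * sin t ^ 2)).
  set (p := fun t => / ((1 - (c ^ 2 - 1) / c ^ 2 * sin t ^ 2) * sqrt (1 - (c ^ 2 - 1) * (1 - j ^ 2) / c ^ 2 * sin t ^ 2))).
  assert (Ef : forall t, f t = / sqrt (DD c j t)).
  { intros; unfold f; rewrite k_eq; lra. }
  assert (Ep : forall t, p t = / ((1 + bb c * sin t ^ 2) * sqrt (DD c j t))).
  { intros; unfold p; rewrite k_eq, n_eq; lra. }
  assert (exf : ex_RInt f 0 (PI/2)).
  { apply (@ex_RInt_continuous R_CompleteNormedModule); intros. apply (@ex_derive_continuous R_AbsRing R_NormedModule).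
    apply (ex_derive_ext (fun t => / sqrt (DD c j t))). intros; symmetry; apply Ef.
    pose proof (DD_ge1 c j z Hc Hj). unfold DD in *. auto_derive.
    repeat split; try lra; try (apply Rgt_not_eq, sqrt_lt_R0; lra). }
  assert (exp : ex_RInt p 0 (PI/2)).
  { apply (@ex_RInt_continuous R_CompleteNormedModule); intros. apply (@ex_derive_continuous R_AbsRing R_NormedModule).
    apply (ex_derive_ext (fun t => / ((1 + bb c * sin t ^ 2) * sqrt (DD c j t)))). intros; symmetry; apply Ep.
    pose proof (DD_ge1 c j z Hc Hj). pose proof (den_pos c z Hc).
    pose proof (sqrt_lt_R0 (1 + bb c * (1 - j ^ 2) * sin z ^ 2)).
    unfold DD in *. auto_derive.
    repeat split; try lra; try (apply Rgt_not_eq, sqrt_lt_R0; lra).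
    assert (A : 0 < 1 + bb c * sin z ^ 2) by (destruct Hc; nra).
    specialize (H2 ltac:(lra)).
    apply Rgt_not_eq, Rmult_lt_0_compat; simpl in A, H2 |- *; lra. }
  transitivity (RInt (fun x => plus (scal (- j * c) (f x)) (scal (j / c) (p x))) 0 (PI/2)).
  { rewrite (@RInt_plus R_CompleteNormedModule).
    2: { apply (@ex_RInt_scal R_CompleteNormedModule); assumption. }
    2: { apply (@ex_RInt_scal R_CompleteNormedModule); assumption. }
    rewrite !(@RInt_scal R_CompleteNormedModule) by assumption. reflexivity. }
  apply RInt_ext. intros t _. rewrite Ef, Ep. unfold hh, GG.
  change (plus (scal (- j * c) ?a) (scal (j/c) ?b)) with ((-j*c)*a + (j/c)*b).
  pose proof (DD_ge1 c j t Hc Hj). pose proof (den_pos c t Hc).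
  pose proof (sqrt_lt_R0 (DD c j t) ltac:(lra)).
  assert (0 < 1 + bb c * sin t ^ 2) by (destruct Hc; nra).
  match goal with |- ?x = ?y => change (@eq R x y) end.
  field. repeat split; lra.
Qed.

Definition Phi c t := t + atan ((1 - c) * sin t * cos t / (c + (1 - c) * sin t ^ 2)) - c * t.
Lemma Phi_der c x : 0 < c < 1 -> is_derive (Phi c) x (GG c x).
Proof. intros Hc. unfold Phi, GG, bb.
 pose proof (sin2_cos2 x) as E. unfold Rsqr in E.
 assert (Hd : 0 < c + (1 - c) * sin x ^ 2) by nra.
 auto_derive. lra.
 generalize dependent (sin x); generalize dependent (cos x). intros co s E Hd.
 assert (Hc2 : c ^ 2 <> 0) by (apply pow_nonzero; lra).
 assert (Hk : 1 + (1 - c ^ 2) / c ^ 2 * s ^ 2 = (c^2 + (1 - c^2) * s^2) / c^2) by (field; lra).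
 rewrite Hk.
 assert (Hq : 0 < c^2 + (1 - c^2) * s^2) by nra.
 field_simplify; try lra.
 - replace (co ^ 2) with (1 - s ^ 2) by nra.
   field. nra.
 - assert (A1 : 0 <= ((1 - c) * s * co) * ((1 - c) * s * co)) by apply Rle_0_sqr.
   assert (A2 : 0 < c + (1 - c) * (s * s)) by (simpl in Hd; lra).
   split; apply Rgt_not_eq. lra. nra.
Qed.

Lemma GG_der c t : 0 < c < 1 -> ex_derive (GG c) t.
Proof. intros. pose proof (den_pos c t H). unfold GG in *. auto_derive. lra. Qed.

Lemma RInt_GG c : 0 < c < 1 -> RInt (GG c) 0 (PI/2) = (1 - c) * (PI / 2).
Proof. intros Hc.
 apply is_RInt_unique.
 replace ((1 - c) * (PI / 2)) with (minus (Phi c (PI/2)) (Phi c 0)).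
 2: { unfold minus, plus, opp; simpl. unfold Phi. rewrite sin_PI2, cos_PI2, sin_0, cos_0.
      replace ((1 - c) * 1 * 0 / (c + (1 - c) * 1 ^ 2)) with 0 by (field; lra).
      replace ((1 - c) * 0 * 1 / (c + (1 - c) * 0 ^ 2)) with 0 by (field; lra).
      rewrite atan_0. ring. }
 apply (@is_RInt_derive R_CompleteNormedModule).
 - intros; apply Phi_der; auto.
 - intros; apply (@ex_derive_continuous R_AbsRing R_NormedModule), GG_der; auto.
Qed.

Lemma GG_bounds c t : 0 < c < 1 -> c <= / (c * (1 + bb c * sin t ^ 2)) <= / c.
Proof. intros Hc. pose proof (den_pos c t Hc) as Hq. pose proof (sin2_bnd t) as Hs.
 pose proof (bb_pos c Hc).
 set (q := c * (1 + bb c * sin t ^ 2)) in *.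
 assert (E : c * q = c ^ 2 + (1 - c ^ 2) * sin t ^ 2) by (unfold q, bb; field; lra).
 split.
 - apply (Rmult_le_reg_r q); auto. rewrite Rinv_l by lra.
   assert (0 <= (1 - c ^ 2) * (1 - sin t ^ 2)) by (apply Rmult_le_pos; nra). nra.
 - apply Rinv_le_contravar; [lra|]. unfold q. assert (0 <= bb c * sin t ^ 2) by (apply Rmult_le_pos; lra). nra.
Qed.

Lemma GG_pos c t : 0 < c < 1 -> 0 < t < PI/2 -> 0 < GG c t.
Proof. intros Hc Ht. pose proof (den_pos c t Hc) as Hq.
 assert (Hco : 0 < cos t) by (apply cos_gt_0; lra).
 pose proof (sin2_cos2 t) as E2. unfold Rsqr in E2.
 assert (Hs : sin t ^ 2 < 1) by nra.
 set (q := c * (1 + bb c * sin t ^ 2)) in *.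
 assert (E : c * q = c ^ 2 + (1 - c ^ 2) * sin t ^ 2) by (unfold q, bb; field; lra).
 unfold GG. fold q. cut (c < / q). lra.
 apply (Rmult_lt_reg_r q); auto. rewrite Rinv_l by lra.
 assert (0 < (1 - c ^ 2) * (1 - sin t ^ 2)) by (apply Rmult_lt_0_compat; nra). nra.
Qed.

Lemma sqrtDD c j t : 0 < c < 1 -> 0 <= j <= 1 -> 1 <= sqrt (DD c j t) /\ sqrt (DD c j t) * sqrt (DD c j t) = DD c j t.
Proof. intros. pose proof (DD_ge1 c j t H H0). split.
 rewrite <- sqrt_1. apply sqrt_le_1_alt. lra. apply sqrt_sqrt. lra. Qed.

Lemma DD_diff c j1 j2 t : DD c j1 t - DD c j2 t = bb c * sin t ^ 2 * (j2 - j1) * (j2 + j1).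
Proof. unfold DD. ring. Qed.

Lemma sqrt_mono c j1 j2 t : 0 < c < 1 -> 0 <= j1 <= j2 -> j2 <= 1 -> sqrt (DD c j2 t) <= sqrt (DD c j1 t).
Proof. intros. apply sqrt_le_1_alt. pose proof (DD_diff c j1 j2 t). pose proof (bb_pos c H). pose proof (sin2_bnd t).
 assert (0 <= bb c * sin t ^ 2) by (apply Rmult_le_pos; lra).
 assert (0 <= bb c * sin t ^ 2 * (j2 - j1) * (j2 + j1)) by (apply Rmult_le_pos; [apply Rmult_le_pos|]; lra). lra. Qed.

Lemma phi_lt c j1 j2 t : 0 < c < 1 -> 0 <= j1 < j2 -> j2 <= 1 ->
  j1 / sqrt (DD c j1 t) < j2 / sqrt (DD c j2 t).
Proof. intros. destruct (sqrtDD c j1 t H) as [A1 B1]; [lra|].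
 destruct (sqrtDD c j2 t H) as [A2 B2]; [lra|].
 pose proof (sqrt_mono c j1 j2 t H ltac:(lra) H1).
 set (r1 := sqrt (DD c j1 t)) in *. set (r2 := sqrt (DD c j2 t)) in *.
 apply Rmult_lt_reg_r with (r1 * r2). nra.
 replace (j1 / r1 * (r1 * r2)) with (j1 * r2) by (field; lra).
 replace (j2 / r2 * (r1 * r2)) with (j2 * r1) by (field; lra). nra. Qed.

Lemma phi_lip c j1 j2 t : 0 < c < 1 -> 0 <= j1 <= j2 -> j2 <= 1 ->
  j2 / sqrt (DD c j2 t) - j1 / sqrt (DD c j1 t) <= (1 + bb c) * (j2 - j1).
Proof. intros. destruct (sqrtDD c j1 t H) as [A1 B1]; [lra|].
 destruct (sqrtDD c j2 t H) as [A2 B2]; [lra|].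
 pose proof (sqrt_mono c j1 j2 t H ltac:(lra) H1).
 pose proof (DD_diff c j1 j2 t). pose proof (bb_pos c H). pose proof (sin2_bnd t).
 set (r1 := sqrt (DD c j1 t)) in *. set (r2 := sqrt (DD c j2 t)) in *.
 set (b := bb c) in *. set (u := sin t ^ 2) in *.
 assert (K1 : (r1 - r2) * (r1 + r2) <= 2 * b * (j2 - j1)).
 { replace ((r1 - r2) * (r1 + r2)) with (r1 * r1 - r2 * r2) by ring. rewrite B1, B2, H3.
   assert (0 <= b * (j2 - j1)) by nra.
   assert (b * u * (j2 - j1) <= b * (j2 - j1)) by nra. nra. }
 assert (K2 : r1 - r2 <= b * (j2 - j1)).
 { assert (0 <= b * (j2 - j1)) by nra. nra. }
 assert (K3 : j2 * r1 - j1 * r2 <= (1 + b) * (j2 - j1) * (r1 * r2)).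
 { assert (j2 * r1 - j1 * r2 = (j2 - j1) * r1 + j1 * (r1 - r2)) by ring.
   assert (0 <= (j2 - j1) * r1 * (r2 - 1)) by (apply Rmult_le_pos; [apply Rmult_le_pos|]; lra).
   assert ((j2 - j1) * r1 <= (j2 - j1) * r1 * r2) by nra.
   assert (j1 * (r1 - r2) <= r1 - r2) by nra.
   assert (0 <= b * (j2 - j1)) by nra.
   assert (1 <= r1 * r2) by nra.
   assert (0 <= b * (j2 - j1) * (r1 * r2 - 1)) by (apply Rmult_le_pos; lra).
   assert (b * (j2 - j1) <= b * (j2 - j1) * (r1 * r2)) by nra. nra. }
 apply Rmult_le_reg_r with (r1 * r2). nra.
 replace ((j2 / r2 - j1 / r1) * (r1 * r2)) with (j2 * r1 - j1 * r2) by (field; lra). lra. Qed.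

Lemma hh_cont c j t : 0 < c < 1 -> 0 <= j <= 1 -> continuous (hh c j) t.
Proof. intros. apply (@ex_derive_continuous R_AbsRing R_NormedModule), hh_der; auto. Qed.

Lemma hh_ex c j : 0 < c < 1 -> 0 <= j <= 1 -> ex_RInt (hh c j) 0 (PI/2).
Proof. intros. apply (@ex_RInt_continuous R_CompleteNormedModule). intros; apply hh_cont; auto. Qed.

Lemma FF_lt c j1 j2 : 0 < c < 1 -> 0 <= j1 < j2 -> j2 <= 1 -> FF c j1 < FF c j2.
Proof. intros. unfold FF. apply RInt_lt.
 - pose proof PI_RGT_0. lra.
 - intros; apply hh_cont; auto; lra.
 - intros; apply hh_cont; auto; lra.
 - intros t Ht. unfold hh. apply Rmult_lt_compat_l. apply GG_pos; auto.
   apply phi_lt; auto.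
Qed.

Lemma FF_le c j1 j2 : 0 < c < 1 -> 0 <= j1 <= j2 -> j2 <= 1 -> FF c j1 <= FF c j2.
Proof. intros. destruct (Req_dec j1 j2). subst; lra. left; apply FF_lt; auto; lra. Qed.

Definition LL c := PI / 2 * (/ c * (1 + bb c)).

Lemma FF_lip c j1 j2 : 0 < c < 1 -> 0 <= j1 <= j2 -> j2 <= 1 -> FF c j2 - FF c j1 <= LL c * (j2 - j1).
Proof. intros. unfold FF.
 pose proof PI_RGT_0.
 assert (E : RInt (hh c j2) 0 (PI/2) - RInt (hh c j1) 0 (PI/2) = RInt (fun t => hh c j2 t - hh c j1 t) 0 (PI/2)).
 { rewrite (@RInt_minus R_CompleteNormedModule (hh c j2) (hh c j1)). reflexivity.
   apply hh_ex; auto; lra. apply hh_ex; auto; lra. }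
 rewrite E.
 assert (E2 : LL c * (j2 - j1) = RInt (fun _ => / c * (1 + bb c) * (j2 - j1)) 0 (PI/2)).
 { rewrite (@RInt_const R_CompleteNormedModule). unfold LL. change (scal ?a ?b) with (a * b). ring. }
 rewrite E2. apply RInt_le. lra.
 - apply (@ex_RInt_continuous R_CompleteNormedModule). intros.
   apply (@continuous_minus R_UniformSpace R_AbsRing R_NormedModule (hh c j2) (hh c j1)); apply hh_cont; auto; lra.
 - apply ex_RInt_const.
 - intros t Ht. unfold hh.
   pose proof (GG_bounds c t H). assert (0 <= GG c t) by (unfold GG; lra).
   assert (GG c t <= / c) by (unfold GG; lra).
   pose proof (phi_lip c j1 j2 t H H0 H1).
   pose proof (phi_lt c j1 j2 t H) as PL.
   assert (0 <= j2 / sqrt (DD c j2 t) - j1 / sqrt (DD c j1 t)).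
   { destruct (Req_dec j1 j2) as [Heq|Hne]. subst; lra. specialize (PL ltac:(lra) H1). lra. }
   assert (0 < / c) by (apply Rinv_0_lt_compat; lra).
   replace (GG c t * (j2 / sqrt (DD c j2 t)) - GG c t * (j1 / sqrt (DD c j1 t)))
     with (GG c t * (j2 / sqrt (DD c j2 t) - j1 / sqrt (DD c j1 t))) by ring.
   rewrite Rmult_assoc. apply Rmult_le_compat; lra.
Qed.

Lemma LL_pos c : 0 < c < 1 -> 0 < LL c.
Proof. intros. unfold LL. pose proof PI_RGT_0. pose proof (bb_pos c H).
 assert (0 < / c) by (apply Rinv_0_lt_compat; lra).
 apply Rmult_lt_0_compat. lra. apply Rmult_lt_0_compat; lra. Qed.

Definition cl (j : R) := Rmax 0 (Rmin 1 j).

Lemma cl_in j : 0 <= cl j <= 1.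
Proof. unfold cl, Rmax, Rmin. repeat destruct Rle_dec; lra. Qed.
Lemma cl_lip x y : Rabs (cl x - cl y) <= Rabs (x - y).
Proof. unfold cl, Rmax, Rmin. repeat destruct Rle_dec; unfold Rabs; repeat destruct Rcase_abs; lra. Qed.
Lemma cl_id j : 0 <= j <= 1 -> cl j = j.
Proof. intros. unfold cl, Rmax, Rmin. repeat destruct Rle_dec; lra. Qed.

Lemma lip_cont (f : R -> R) L a : 0 < L -> (forall x y, Rabs (f x - f y) <= L * Rabs (x - y)) -> continuity_pt f a.
Proof. intros HL Hf. unfold continuity_pt, continue_in, limit1_in, limit_in. intros eps He.
 exists (eps / L). split. apply Rdiv_lt_0_compat; lra.
 intros x [_ Hx]. simpl in *. unfold R_dist in *.
 eapply Rle_lt_trans. apply Hf.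
 apply Rmult_lt_reg_l with (/ L). apply Rinv_0_lt_compat; lra.
 rewrite <- Rmult_assoc, Rinv_l by lra. replace (/ L * eps) with (eps / L) by (unfold Rdiv; ring). lra. Qed.

Lemma FF_lip_abs c x y : 0 < c < 1 -> Rabs (FF c (cl x) - FF c (cl y)) <= LL c * Rabs (x - y).
Proof. intros. pose proof (cl_in x). pose proof (cl_in y). pose proof (cl_lip x y).
 pose proof (LL_pos c H).
 assert (Rabs (FF c (cl x) - FF c (cl y)) <= LL c * Rabs (cl x - cl y)).
 { destruct (Rle_dec (cl x) (cl y)).
   - pose proof (FF_lip c (cl x) (cl y) H ltac:(lra) ltac:(lra)).
     pose proof (FF_le c (cl x) (cl y) H ltac:(lra) ltac:(lra)).
     rewrite Rabs_left1 by lra. rewrite (Rabs_left1 (cl x - cl y)) by lra. lra.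
   - pose proof (FF_lip c (cl y) (cl x) H ltac:(lra) ltac:(lra)).
     pose proof (FF_le c (cl y) (cl x) H ltac:(lra) ltac:(lra)).
     rewrite Rabs_right by lra. rewrite (Rabs_right (cl x - cl y)) by lra. lra. }
 eapply Rle_trans. apply H4. apply Rmult_le_compat_l; lra. Qed.

Lemma FF_0 c : 0 < c < 1 -> FF c 0 = 0.
Proof. intros. pose proof (expr_eq c 0 H ltac:(lra)) as E. rewrite <- E. unfold Rdiv. ring. Qed.

Lemma FF_1 c : 0 < c < 1 -> FF c 1 = (1 - c) * (PI / 2).
Proof. intros. rewrite <- RInt_GG by auto. unfold FF. apply RInt_ext. intros t _.
 unfold hh. replace (DD c 1 t) with 1 by (unfold DD; ring). rewrite sqrt_1. match goal with |- ?x = ?y => change (@eq R x y) end. field. Qed.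

Theorem mainTheorem8 (c : R) (hc0 : 0 < c) (hc1 : c < 1 / 2) :
  exists! j : R, (0 <= j <= 1) /\
    - j * c * ellK ((c ^ 2 - 1) * (1 - j ^ 2) / c ^ 2)
    + j / c * ellPi ((c ^ 2 - 1) / c ^ 2) ((c ^ 2 - 1) * (1 - j ^ 2) / c ^ 2)
    = PI / 4.
Proof.
  assert (Hc : 0 < c < 1) by lra.
  pose proof PI_RGT_0.
  destruct (Ranalysis5.IVT_interv (fun j => FF c (cl j) - PI / 4) 0 1) as [z [Hz Ez]].
  - intros a _. apply (lip_cont _ (LL c)). apply LL_pos; auto.
    intros x y. replace (FF c (cl x) - PI / 4 - (FF c (cl y) - PI / 4)) with (FF c (cl x) - FF c (cl y)) by ring.
    apply FF_lip_abs; auto.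
  - lra.
  - rewrite cl_id by lra. rewrite FF_0 by auto. lra.
  - rewrite cl_id by lra. rewrite FF_1 by auto. nra.
  - rewrite cl_id in Ez by lra. exists z. split.
    + split; auto. rewrite expr_eq by auto. lra.
    + intros y [Hy Ey]. rewrite expr_eq in Ey by auto.
      destruct (Rtotal_order y z) as [H1|[H1|H1]]; auto.
      * pose proof (FF_lt c y z Hc ltac:(lra) ltac:(lra)). lra.
      * pose proof (FF_lt c z y Hc ltac:(lra) ltac:(lra)). lra.
Qed.
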